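(* For every $n>0$: (1) $L_{\mathrm{RCC8}}(\mathcal{RS})=L^{\mathrm{S}}_{\mathrm{RCC8}}(\mathcal{TOP})=L^{\mathrm{S}}_{\mathrm{RCC8}}(\mathbb{R}^n,\mathbb{R}^n_{\mathrm{reg}})$; (2) $L^{\mathrm{fin}}_{\mathrm{RCC8}}(\mathcal{RS})=L^{\mathrm{fin}}_{\mathrm{RCC8}}(\mathcal{TOP})=L^{\mathrm{fin}}_{\mathrm{RCC8}}(\mathbb{R}^n,\mathbb{R}^n_{\mathrm{reg}})$.
   Context: Topological space $\mathfrak T=(U,\mathbb I)$ with interior operator $\mathbb I$ and closure $\mathbb C(s)=U-\mathbb I(U-s)$; $s$ is regular closed if $\mathbb C\mathbb I(s)=s$; $\mathfrak T_{\mathrm{reg}}$ is the set of non-empty regular closed subsets; $\mathbb R^n$ has the Euclidean topology. RCC8 relations on subsets: $\mathrm{dc}$: $s\cap t=\emptyset$; $\mathrm{ec}$: $\mathbb I s\cap\mathbb I t=\emptyset\ne s\cap t$; $\mathrm{po}$: $\mathbb I s\cap\mathbb I t\ne\emptyset$, $s\not\subseteq t$, $t\not\subseteq s$; $\mathrm{eq}$: $s=t$; $\mathrm{tpp}$: $s\subseteq t$, $s\not\subseteq\mathbb I t$, $s\ne t$; $\mathrm{ntpp}$: $s\subseteq\mathbb I t$, $s\neq t$; $\mathrm{tppi},\mathrm{ntppi}$ the inverses. The concrete region structure $\mathfrak R(\mathfrak T,U_{\mathfrak T})$ for a set $U_{\mathfrak T}$ of non-empty regular closed sets has domain $U_{\mathfrak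 T}$ and these eight relations. $\mathcal{TOP}$ is the class of all $\mathfrak R(\mathfrak T,\mathfrak T_{\mathrm{reg}})$. $\mathcal{RS}$ is the class of all general region structures: $\langle W,\dots\rangle$ with $W\ne\emptyset$ and eight mutually disjoint, jointly exhaustive binary relations, $\mathrm{eq}$ the identity, $\mathrm{dc},\mathrm{ec},\mathrm{po}$ symmetric, $\mathrm{tppi},\mathrm{ntppi}$ inverse to $\mathrm{tpp},\mathrm{ntpp}$, satisfying the standard RCC8 composition table (for each composition $r_1\circ r_2$ the relation between $x$ and $z$ lies in the table entry). $\mathcal L_{\mathrm{RCC8}}$: modal language over variables $p_1,p_2,\dots$ with $\neg,\wedge$ and $[r]$ for each relation $r$; a region model is a region structure with valuation; $\mathfrak M,s\models[r]\varphi$ iff $\varphi$ holds at all $t$ with $(s,t)\in r$. For a class $\mathcal S$, $L_{\mathrm{RCC8}}(\mathcal S)$ is the set of formulas true at all regions of all models based on members of $\mathcal S$; $L^{\mathrm S}_{\mathrm{RCC8}}(\mathcal S)$ the set valid in all substructures (restrictions to non-empty subsets of the domain) of members of $\mathcal S$; $L^{\mathrm{fin}}_{\mathrm{RCC8}}(\mathcal S)$ the set valid in all finite substructures. For a single structure we write $L(\mathfrak T,U_{\mathfrak T})$ for $L(\{\mathfrak R(\mathfrak T,U_{\mathfrak T})\})$. *)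

(* Defs.v *)
From HB Require Import structures.
From mathcomp Require Import all_boot all_order all_algebra.
From mathcomp Require Import all_classical all_reals all_analysis.
From mathcomp Require Import Rstruct Rstruct_topology.
From Stdlib Require Import List.

Set Implicit Arguments.
Unset Strict Implicit.
Unset Printing Implicit Defensive.

Local Open Scope classical_set_scope.

Inductive rcc8 : Type := DC | EC | PO | EQ | TPP | NTPP | TPPI | NTPPI.

(** The standard RCC8 composition table: [comp r1 r2] lists the possible
    relations between x and z when x r1 y and y r2 z. *)
Definition all8 : list rcc8 := DC :: EC :: PO :: EQ :: TPP :: NTPP :: TPPI :: NTPPI :: nil.

Definition comp (r1 r2 : rcc8) : list rcc8 :=
  match r1, r2 with
  | EQ, r => r :: nil
  | r, EQ => r :: nil
  | DC, DC => all8
  | DC, EC => DC :: EC :: PO :: TPP :: NTPP :: nil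
  | DC, PO => DC :: EC :: PO :: TPP :: NTPP :: nil
  | DC, TPP => DC :: EC :: PO :: TPP :: NTPP :: nil
  | DC, NTPP => DC :: EC :: PO :: TPP :: NTPP :: nil
  | DC, TPPI => DC :: nil
  | DC, NTPPI => DC :: nil
  | EC, DC => DC :: EC :: PO :: TPPI :: NTPPI :: nil
  | EC, EC => DC :: EC :: PO :: TPP :: TPPI :: EQ :: nil
  | EC, PO => DC :: EC :: PO :: TPP :: NTPP :: nil
  | EC, TPP => EC :: PO :: TPP :: NTPP :: nil
  | EC, NTPP => PO :: TPP :: NTPP :: nil
  | EC, TPPI => DC :: EC :: nil
  | EC, NTPPI => DC :: nil
  | PO, DC => DC :: EC :: PO :: TPPI :: NTPPI :: nil
  | PO, EC => DC :: EC :: PO :: TPPI :: NTPPI :: nil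
  | PO, PO => all8
  | PO, TPP => PO :: TPP :: NTPP :: nil
  | PO, NTPP => PO :: TPP :: NTPP :: nil
  | PO, TPPI => DC :: EC :: PO :: TPPI :: NTPPI :: nil
  | PO, NTPPI => DC :: EC :: PO :: TPPI :: NTPPI :: nil
  | TPP, DC => DC :: nil
  | TPP, EC => DC :: EC :: nil
  | TPP, PO => DC :: EC :: PO :: TPP :: NTPP :: nil
  | TPP, TPP => TPP :: NTPP :: nil
  | TPP, NTPP => NTPP :: nil
  | TPP, TPPI => DC :: EC :: PO :: TPP :: TPPI :: EQ :: nil
  | TPP, NTPPI => DC :: EC :: PO :: TPPI :: NTPPI :: nil
  | NTPP, DC => DC :: nil
  | NTPP, EC => DC :: nil
  | NTPP, PO => DC :: EC :: PO :: TPP :: NTPP :: nil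
  | NTPP, TPP => NTPP :: nil
  | NTPP, NTPP => NTPP :: nil
  | NTPP, TPPI => DC :: EC :: PO :: TPP :: NTPP :: nil
  | NTPP, NTPPI => all8
  | TPPI, DC => DC :: EC :: PO :: TPPI :: NTPPI :: nil
  | TPPI, EC => EC :: PO :: TPPI :: NTPPI :: nil
  | TPPI, PO => PO :: TPPI :: NTPPI :: nil
  | TPPI, TPP => PO :: EQ :: TPP :: TPPI :: nil
  | TPPI, NTPP => PO :: TPP :: NTPP :: nil
  | TPPI, TPPI => TPPI :: NTPPI :: nil
  | TPPI, NTPPI => NTPPI :: nil
  | NTPPI, DC => DC :: EC :: PO :: TPPI :: NTPPI :: nil
  | NTPPI, EC => PO :: TPPI :: NTPPI :: nil
  | NTPPI, PO => PO :: TPPI :: NTPPI :: nil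
  | NTPPI, TPP => PO :: TPPI :: NTPPI :: nil
  | NTPPI, NTPP => PO :: TPP :: NTPP :: TPPI :: NTPPI :: EQ :: nil
  | NTPPI, TPPI => NTPPI :: nil
  | NTPPI, NTPPI => NTPPI :: nil
  end.

Definition region_structure (W : Type) (rel : rcc8 -> W -> W -> Prop) : Prop :=
  inhabited W /\
      (forall r1 r2 x y, rel r1 x y -> rel r2 x y -> r1 = r2)   /\
      (forall x y, exists r, rel r x y)                          /\
      (forall x y, rel EQ x y <-> x = y)                         /\
      (forall x y, (rel DC x y -> rel DC y x) /\ (rel EC x y -> rel EC y x)
                   /\ (rel PO x y -> rel PO y x))                /\
      (forall x y, (rel TPPI x y <-> rel TPP y x) /\ (rel NTPPI x y <-> rel NTPP y x)) /\
      (forall r1 r2 r x y z, rel r1 x y -> rel r2 y z -> rel r x z ->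
         List.In r (comp r1 r2)).

Section Topo.
Variable T : topologicalType.

Definition Cl (s : set T) : set T := ~` interior (~` s).

Definition regular_closed (s : set T) : Prop := Cl (interior s) = s.

Definition nonempty_regular_closed (s : set T) : Prop :=
  regular_closed s /\ s !=set0.

Definition top_rel (r : rcc8) (s t : set T) : Prop :=
  match r with
  | DC => s `&` t = set0
  | EC => interior s `&` interior t = set0 /\ s `&` t !=set0
  | PO => interior s `&` interior t !=set0 /\ ~ (s `<=` t) /\ ~ (t `<=` s)
  | EQ => s = t
  | TPP => s `<=` t /\ ~ (s `<=` interior t) /\ s <> t
  | NTPP => s `<=` interior t /\ s <> t
  | TPPI => t `<=` s /\ ~ (t `<=` interior s) /\ t <> s
  | NTPPI => t `<=` interior s /\ t <> s
  end.
End Topo.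

Inductive form : Type :=
  | Var : nat -> form
  | Neg : form -> form
  | And : form -> form -> form
  | Box : rcc8 -> form -> form.

Fixpoint holds (W : Type) (rel : rcc8 -> W -> W -> Prop) (V : nat -> W -> Prop)
    (w : W) (phi : form) : Prop :=
  match phi with
  | Var i => V i w
  | Neg p => ~ holds rel V w p
  | And p q => holds rel V w p /\ holds rel V w q
  | Box r p => forall u, rel r w u -> holds rel V u p
  end.

Definition valid_in (W : Type) (rel : rcc8 -> W -> W -> Prop) (phi : form) : Prop :=
  forall (V : nat -> W -> Prop) (w : W), holds rel V w phi.

Definition restrict (W : Type) (rel : rcc8 -> W -> W -> Prop) (S : set W)
  : rcc8 -> {x : W | S x} -> {x : W | S x} -> Prop :=
  fun r x y => rel r (proj1_sig x) (proj1_sig y).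

Definition valid_sub (W : Type) (rel : rcc8 -> W -> W -> Prop) (phi : form) : Prop :=
  forall S : set W, S !=set0 -> valid_in (@restrict W rel S) phi.

Definition valid_finsub (W : Type) (rel : rcc8 -> W -> W -> Prop) (phi : form) : Prop :=
  forall S : set W, S !=set0 -> finite_set S -> valid_in (@restrict W rel S) phi.

Definition Treg (T : topologicalType) : Type := {s : set T | nonempty_regular_closed s}.

Definition Treg_rel (T : topologicalType) : rcc8 -> Treg T -> Treg T -> Prop :=
  fun r s t => top_rel r (proj1_sig s) (proj1_sig t).

Definition L_RS (phi : form) : Prop :=
  forall (W : Type) (rel : rcc8 -> W -> W -> Prop),
    region_structure rel -> valid_in rel phi.

Definition LS_TOP (phi : form) : Prop :=
  forall T : topologicalType, valid_sub (@Treg_rel T) phi.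

Definition Rn (n : nat) : topologicalType := 'rV[Rdefinitions.R]_n.

Definition LS_Rn (n : nat) (phi : form) : Prop := valid_sub (@Treg_rel (Rn n)) phi.

Definition Lfin_RS (phi : form) : Prop :=
  forall (W : Type) (rel : rcc8 -> W -> W -> Prop),
    region_structure rel -> valid_finsub rel phi.

Definition Lfin_TOP (phi : form) : Prop :=
  forall T : topologicalType, valid_finsub (@Treg_rel T) phi.

Definition Lfin_Rn (n : nat) (phi : form) : Prop := valid_finsub (@Treg_rel (Rn n)) phi.

(* Main.v *)
From HB Require Import structures.
From mathcomp Require Import all_boot all_order all_algebra.
From mathcomp Require Import all_classical all_reals all_analysis.
From mathcomp Require Import Rstruct Rstruct_topology.
From Stdlib Require Import ProofIrrelevance.
From Stdlib Require List.
From mathcomp.algebra_tactics Require Import ring lra.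
Require Import Defs.
Import Order.TTheory GRing.Theory Num.Theory.
Set Implicit Arguments. Unset Strict Implicit. Unset Printing Implicit Defensive.
Local Open Scope classical_set_scope.

Lemma sig_eq (A : Type) (P : A -> Prop) (x y : {a | P a}) :
  proj1_sig x = proj1_sig y -> x = y.
Proof. destruct x, y; simpl; intros E; subst; f_equal; apply proof_irrelevance. Qed.

Record rules (X : Type) (M I Sb Si : X -> X -> Prop) : Prop := Rules {
  HMs : forall x y, M x y -> M y x;
  HIs : forall x y, I x y -> I y x;
  HSbt : forall x y z, Sb x y -> Sb y z -> Sb x z;
  HSiSb : forall x y, Si x y -> Sb x y;
  HSbSi : forall x y z, Sb x y -> Si y z -> Si x z;
  HSiSb2 : forall x y z, Si x y -> Sb y z -> Si x z;
  HMSb : forall x y z, M x y -> Sb y z -> M x z;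
  HISb : forall x y z, I x y -> Sb y z -> I x z;
  HMSi : forall x y z, M x y -> Si y z -> I x z;
  HIM : forall x y, I x y -> M x y;
  HSbI : forall x y, Sb x y -> I x y;
  Hanti : forall x y, Sb x y -> Sb y x -> x = y;
  HSbr : forall x, Sb x x }.

Section Abstract.
Variable X : Type.
Variables M I Sb Si : X -> X -> Prop.
Hypothesis Hr : rules M I Sb Si.

Definition arel (r : rcc8) (s t : X) : Prop :=
  match r with
  | DC => ~ M s t
  | EC => ~ I s t /\ M s t
  | PO => I s t /\ ~ Sb s t /\ ~ Sb t s
  | EQ => s = t
  | TPP => Sb s t /\ ~ Si s t /\ s <> t
  | NTPP => Si s t /\ s <> t
  | TPPI => Sb t s /\ ~ Si t s /\ t <> s
  | NTPPI => Si t s /\ t <> s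
  end.


Ltac addh t := let T := type of t in
  lazymatch goal with _ : T |- _ => fail | _ => have := t; intro end.

Ltac sat1 :=
  match goal with
  | H : M ?x ?y |- _ => addh (HMs Hr H)
  | H : I ?x ?y |- _ => addh (HIs Hr H)
  | H : Si ?x ?y |- _ => addh (HSiSb Hr H)
  | H : I ?x ?y |- _ => addh (HIM Hr H)
  | H : Sb ?x ?y |- _ => addh (HSbI Hr H)
  | H : Sb ?x ?y, H' : Sb ?y ?z |- _ => addh (HSbt Hr H H')
  | H : Sb ?x ?y, H' : Si ?y ?z |- _ => addh (HSbSi Hr H H')
  | H : Si ?x ?y, H' : Sb ?y ?z |- _ => addh (HSiSb2 Hr H H')
  | H : M ?x ?y, H' : Sb ?y ?z |- _ => addh (HMSb Hr H H')
  | H : I ?x ?y, H' : Sb ?y ?z |- _ => addh (HISb Hr H H')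
  | H : M ?x ?y, H' : Si ?y ?z |- _ => addh (HMSi Hr H H')
  end.

Ltac kill := repeat match goal with H : _ /\ _ |- _ => destruct H end; subst;
  repeat match goal with x : X |- _ => addh (HSbr Hr x) end;
  repeat sat1;
  first [ match goal with H : ~ ?P, H' : ?P |- _ => exact (H H') end
        | match goal with H : ?x <> ?x |- _ => exact (H erefl) end
        | match goal with H : ?x <> ?y, H1 : Sb ?x ?y, H2 : Sb ?y ?x |- _ => exact (H (Hanti Hr H1 H2)) end ].

Ltac inlist := solve [ repeat (first [ now left | right ]) ].

Lemma arel_comp r1 r2 r x y z :
  arel r1 x y -> arel r2 y z -> arel r x z -> List.In r (comp r1 r2).
Proof.
case: r1; case: r2; case: r; simpl; intros H1 H2 H3; try inlist; exfalso; kill.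
Qed.

Lemma arel_disj r1 r2 x y : arel r1 x y -> arel r2 x y -> r1 = r2.
Proof.
case: r1; case: r2; simpl; intros H1 H2; try reflexivity; exfalso; kill.
Qed.

Lemma arel_exh x y : exists r, arel r x y.
Proof.
case: (pselect (M x y)) => hM; last by exists DC.
case: (pselect (I x y)) => hI; last by exists EC.
case: (pselect (x = y)) => hE; first by exists EQ.
case: (pselect (Sb x y)) => hS.
  case: (pselect (Si x y)) => hSi; [by exists NTPP | by exists TPP].
case: (pselect (Sb y x)) => hS'.
  have hE' : y <> x by move=> e; apply: hE; rewrite e.
  case: (pselect (Si y x)) => hSi; [exists NTPPI | exists TPPI]; simpl; auto.
by exists PO.
Qed.

Lemma arel_sym x y : (arel DC x y -> arel DC y x) /\ (arel EC x y -> arel EC y x)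
  /\ (arel PO x y -> arel PO y x).
Proof.
simpl; split; [|split].
- by move=> H /(HMs Hr).
- by move=> [H1 H2]; split; [move=> /(HIs Hr) | apply: (HMs Hr)].
- by move=> [H1 [H2 H3]]; split; [apply: (HIs Hr) | split].
Qed.

End Abstract.


Lemma set0_iff (T : Type) (A : set T) : A = set0 <-> ~ (A !=set0).
Proof.
split; first by move=> -> [x].
move=> H; apply: funext => x; apply: propext; split => //= Ax; apply: H; by exists x.
Qed.

Lemma int_mono (T : topologicalType) (A B : set T) :
  A `<=` B -> interior A `<=` interior B.
Proof. by move=> AB p; rewrite /interior; apply: filterS. Qed.

Section TopRS.
Variable T : topologicalType.
Definition tM (s t : Treg T) := proj1_sig s `&` proj1_sig t !=set0.
Definition tI (s t : Treg T) := interior (proj1_sig s) `&` interior (proj1_sig t) !=set0.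
Definition tSb (s t : Treg T) := proj1_sig s `<=` proj1_sig t.
Definition tSi (s t : Treg T) := proj1_sig s `<=` interior (proj1_sig t).

Lemma Treg_int (s : Treg T) : interior (proj1_sig s) !=set0.
Proof.
case: s => s [Hr [p sp]] /=; apply: contrapT => H.
move: Hr; rewrite /regular_closed /Cl.
have -> : interior s = set0 by apply/set0_iff.
rewrite setC0 interiorT setCT => Hs.
by rewrite -Hs in sp.
Qed.

Lemma trules : rules tM tI tSb tSi.
Proof.
split.
- by move=> x y [p [a b]]; exists p.
- by move=> x y [p [a b]]; exists p.
- by move=> x y z H1 H2 p /H1/H2.
- by move=> x y H p /H /interior_subset.
- by move=> x y z H1 H2 p /H1/H2.
- by move=> x y z H1 H2; apply: subset_trans H1 (int_mono H2).
- by move=> x y z [p [a b]] H; exists p; split => //; apply: H.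
- by move=> x y z [p [a b]] H; exists p; split => //; apply: (int_mono H).
- move=> [x [Hx Hx2]] y [z [Hz Hz2]] [p [xp yp]] /= yz.
  have zp := yz p yp.
  apply: contrapT => H.
  have H' : interior x `&` interior z = set0 by apply/set0_iff.
  have : Cl (interior x) p by rewrite Hx.
  apply; rewrite /interior.
  have := nbhs_interior zp; apply: filterS => q zq xq.
  have : (interior x `&` interior z) q by split.
  by rewrite H'.
- by move=> x y [p [a b]]; exists p; split; apply: interior_subset.
- move=> x y H; have [p xp] := Treg_int x; exists p; split => //.
  exact: (int_mono H).
- by move=> x y H1 H2; apply: sig_eq; rewrite eqEsubset; split.
- by move=> x p.
Qed.

Lemma neq_val (s t : Treg T) : (proj1_sig s <> proj1_sig t) <-> s <> t.
Proof. split => H E; apply: H; [by rewrite E | exact: sig_eq]. Qed.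

Lemma tr_arel r (s t : Treg T) : Treg_rel r s t <-> arel tM tI tSb tSi r s t.
Proof.
rewrite /Treg_rel; case: r => /=.
- exact: set0_iff.
- by rewrite set0_iff.
- by [].
- by split; [apply: sig_eq | move=> ->].
- by rewrite neq_val.
- by rewrite neq_val.
- by rewrite neq_val.
- by rewrite neq_val.
Qed.
End TopRS.

Lemma RS_equiv (W : Type) (rel rel' : rcc8 -> W -> W -> Prop) :
  (forall r x y, rel r x y <-> rel' r x y) -> region_structure rel -> region_structure rel'.
Proof.
move=> E [h1 [h2 [h3 [h4 [h5 [h6 h7]]]]]]; split => //.
split; first by move=> r1 r2 x y /E H1 /E H2; exact: h2 H1 H2.
split; first by move=> x y; have [r H] := h3 x y; exists r; apply/E.
split; first by move=> x y; rewrite -E.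
split; first by move=> x y; rewrite -!E; exact: h5.
split; first by move=> x y; rewrite -!E; exact: h6.
by move=> r1 r2 r x y z /E H1 /E H2 /E H3; exact: h7 H1 H2 H3.
Qed.

Lemma arel_RS (X : Type) (M I Sb Si : X -> X -> Prop) :
  rules M I Sb Si -> inhabited X -> region_structure (arel M I Sb Si).
Proof.
move=> Hr hX; split => //.
split; first by move=> r1 r2 x y; exact: arel_disj.
split; first by move=> x y; exact: arel_exh.
split; first by [].
split; first by move=> x y; exact: arel_sym.
split; first by [].
by move=> r1 r2 r x y z; exact: arel_comp.
Qed.

Lemma Treg_RS (T : topologicalType) : inhabited (Treg T) -> region_structure (@Treg_rel T).
Proof.
move=> h; apply: (RS_equiv (rel := arel (@tM T) (@tI T) (@tSb T) (@tSi T))).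
  by move=> r x y; rewrite tr_arel.
exact: arel_RS (@trules T) h.
Qed.

Lemma restrict_RS (W : Type) (rel : rcc8 -> W -> W -> Prop) (S : set W) :
  region_structure rel -> S !=set0 -> region_structure (@restrict _ rel S).
Proof.
move=> [h1 [h2 [h3 [h4 [h5 [h6 h7]]]]]] [w Sw].
split; first by constructor; exists w.
split; first by move=> r1 r2 x y; exact: h2.
split; first by move=> x y; exact: h3.
split; first by move=> x y; rewrite /restrict h4; split; [apply: sig_eq | move=> ->].
split; first by move=> x y; exact: h5.
split; first by move=> x y; exact: h6.
by move=> r1 r2 r x y z; exact: h7.
Qed.


Section WLemmas.
Variables (W : Type) (rel : rcc8 -> W -> W -> Prop).
Hypothesis HW : region_structure rel.

Lemma w_disj r1 r2 x y : rel r1 x y -> rel r2 x y -> r1 = r2.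
Proof. exact: HW.2.1. Qed.
Lemma w_eq x y : rel EQ x y -> x = y.
Proof. by move/(HW.2.2.2.1 x y). Qed.
Lemma w_refl x : rel EQ x x.
Proof. exact/(HW.2.2.2.1 x x). Qed.
Lemma w_DCs x y : rel DC x y -> rel DC y x.
Proof. exact: (HW.2.2.2.2.1 x y).1. Qed.
Lemma w_ECs x y : rel EC x y -> rel EC y x.
Proof. exact: (HW.2.2.2.2.1 x y).2.1. Qed.
Lemma w_POs x y : rel PO x y -> rel PO y x.
Proof. exact: (HW.2.2.2.2.1 x y).2.2. Qed.
Lemma w_TPPi x y : rel TPP y x -> rel TPPI x y.
Proof. by move/(HW.2.2.2.2.2.1 x y).1. Qed.
Lemma w_NTPPi x y : rel NTPP y x -> rel NTPPI x y.
Proof. by move/(HW.2.2.2.2.2.1 x y).2. Qed.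
Lemma w_iTPP x y : rel TPPI x y -> rel TPP y x.
Proof. by move/(HW.2.2.2.2.2.1 x y).1. Qed.
Lemma w_iNTPP x y : rel NTPPI x y -> rel NTPP y x.
Proof. by move/(HW.2.2.2.2.2.1 x y).2. Qed.

Lemma cmpE r1 r2 x y z : rel r1 x y -> rel r2 y z ->
  exists r, rel r x z /\ List.In r (comp r1 r2).
Proof.
move=> H1 H2; have [r H3] := HW.2.2.1 x z; exists r; split => //.
exact: HW.2.2.2.2.2.2 H1 H2 H3.
Qed.

Ltac cmpt H1 H2 :=
  let r := fresh "r" in let H := fresh "H" in let Hin := fresh "Hin" in
  have [r [H Hin]] := cmpE H1 H2; simpl in Hin;
  repeat (destruct Hin as [Hin|Hin]; [subst r|]); try (destruct Hin).

Definition wle (a b : W) := rel EQ a b \/ rel TPP a b \/ rel NTPP a b.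

Ltac eqs := repeat match goal with H : rel EQ _ _ |- _ => apply w_eq in H; subst end.

Ltac dis := match goal with H1 : rel ?r1 ?x ?y, H2 : rel ?r2 ?x ?y |- _ =>
  have := w_disj H1 H2; discriminate end.

Lemma wle_refl a : wle a a.
Proof. by left; apply: w_refl. Qed.

Lemma wle_trans a b c : wle a b -> wle b c -> wle a c.
Proof.
move=> [H1|[H1|H1]] [H2|[H2|H2]]; eqs; try exact: wle_refl; try (by rewrite /wle; tauto);
  cmpt H1 H2; rewrite /wle; tauto.
Qed.

Lemma nup_le a b c : rel NTPP a b -> wle b c -> rel NTPP a c.
Proof. by move=> H1 [H2|[H2|H2]]; eqs => //; cmpt H1 H2. Qed.

Lemma wle_nup a b c : wle a b -> rel NTPP b c -> rel NTPP a c.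
Proof. by move=> [H1|[H1|H1]] H2; eqs => //; cmpt H1 H2. Qed.

Lemma wle_DC a u v : wle a u -> rel DC u v -> rel DC a v.
Proof. by move=> [H1|[H1|H1]] H2; eqs => //; cmpt H1 H2. Qed.

Lemma wle_EC a u v : wle a u -> rel EC u v -> rel DC a v \/ rel EC a v.
Proof. by move=> [H1|[H1|H1]] H2; eqs; [right | cmpt H1 H2; tauto | cmpt H1 H2; tauto]. Qed.

Lemma DC_ge a v b : rel DC a v -> wle b v -> rel DC a b.
Proof.
move=> H1 [H2|[H2|H2]]; eqs; try done;
  [have H3 := w_TPPi H2 | have H3 := w_NTPPi H2]; cmpt H1 H3; done.
Qed.

Lemma EC_ge a v b : rel EC a v -> wle b v -> rel DC a b \/ rel EC a b.
Proof.
move=> H1 [H2|[H2|H2]]; eqs; first by right.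
  by have H3 := w_TPPi H2; cmpt H1 H3; tauto.
by have H3 := w_NTPPi H2; cmpt H1 H3; tauto.
Qed.

Lemma EC_nup u v b : rel EC u v -> rel NTPP v b ->
  rel PO u b \/ rel TPP u b \/ rel NTPP u b.
Proof. by move=> H1 H2; cmpt H1 H2; tauto. Qed.

Lemma wle_notDC a v : wle a v -> rel DC a v -> False.
Proof. by case=> [H|[H|H]] H'; eqs; dis || (have H'' := w_refl v; dis). Qed.

Lemma wle_notEC a v : wle a v -> rel EC a v -> False.
Proof. by case=> [H|[H|H]] H'; eqs; dis || (have H'' := w_refl v; dis). Qed.

Lemma wle_notPO a v : wle a v -> rel PO a v -> False.
Proof. by case=> [H|[H|H]] H'; eqs; dis || (have H'' := w_refl v; dis). Qed.

Lemma NTPP_irr a : rel NTPP a a -> False.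
Proof. by move=> H; have H' := w_refl a; dis. Qed.

Lemma TPP_notge x y : rel TPP x y -> wle y x -> False.
Proof.
move=> H [H'|[H'|H']]; eqs.
- by match goal with H : rel TPP ?z ?z |- _ => have H'' := w_refl z; dis end.
- by have H'' := w_TPPi H'; dis.
- by have H'' := w_NTPPi H'; dis.
Qed.

Lemma NTPP_notge x y : rel NTPP x y -> wle y x -> False.
Proof.
move=> H [H'|[H'|H']]; eqs.
- by match goal with H : rel NTPP ?z ?z |- _ => have H'' := w_refl z; dis end.
- by have H'' := w_TPPi H'; dis.
- by have H'' := w_NTPPi H'; dis.
Qed.

Lemma TPP_le x y : rel TPP x y -> wle x y.
Proof. by move=> H; right; left. Qed.
Lemma NTPP_le x y : rel NTPP x y -> wle x y.
Proof. by move=> H; right; right. Qed.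
Lemma TPP_notNTPP x y : rel TPP x y -> rel NTPP x y -> False.
Proof. by move=> H H'; dis. Qed.

End WLemmas.


Section Gadgets.
Variables (W : Type) (rel : rcc8 -> W -> W -> Prop).
Hypothesis HW : region_structure rel.
Local Notation wle := (wle rel).

Definition good (L R : W -> Prop) :=
  [/\ (forall u v, rel DC u v -> (L u \/ R u) -> (L v \/ R v) -> False),
      (forall u v, rel EC u v -> (L u -> L v -> False) /\ (R u -> R v -> False)),
      (forall u v, wle u v -> (L u -> L v) /\ (R u -> R v)) &
      (forall u v, rel NTPP u v -> (L u \/ R u) -> L v /\ R v)].

Definition gL (t : nat) (a b z : W) : Prop :=
  match t with
  | 1 => wle a z \/ (rel PO a b /\ wle b z)
  | 2 => wle a z \/ (rel EC a b /\ rel NTPP b z)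
  | _ => wle a z
  end.

Definition gR (t : nat) (a b z : W) : Prop :=
  match t with
  | 1 => wle a z \/ (rel PO a b /\ wle b z)
  | 2 => (~ rel EC a b /\ wle a z) \/ (rel EC a b /\ (wle b z \/ rel NTPP a z))
  | _ => rel NTPP a z
  end.

Lemma HDC a u v : wle a u -> wle a v -> rel DC u v -> False.
Proof. by move=> H1 H2 H3; apply: (wle_notDC HW H2); apply: (wle_DC HW H1 H3). Qed.

Lemma HEC a u v : wle a u -> wle a v -> rel EC u v -> False.
Proof.
move=> H1 H2 H3; case: (wle_EC HW H1 H3) => H4.
- exact: (wle_notDC HW H2).
- exact: (wle_notEC HW H2).
Qed.

Lemma HDCx a b u v : wle a u -> wle b v -> rel DC u v -> rel DC a b.
Proof. by move=> H1 H2 H3; apply: (DC_ge HW _ H2); apply: (wle_DC HW H1 H3). Qed.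

Lemma HECx a b u v : wle a u -> wle b v -> rel EC u v -> rel DC a b \/ rel EC a b.
Proof.
move=> H1 H2 H3; case: (wle_EC HW H1 H3) => H4.
- by left; apply: (DC_ge HW H4 H2).
- exact: (EC_ge HW H4 H2).
Qed.

Lemma ECnup a b u v : rel EC a b -> wle a u -> rel NTPP b v -> rel EC u v -> False.
Proof.
move=> H0 H1 H2 H3.
have H4 := EC_nup HW H0 H2.
case: (wle_EC HW H1 H3) => H5; case: H4 => [H6|[H6|H6]];
  by have := w_disj HW H5 H6.
Qed.

Lemma pairDC a b u v : ~ rel DC a b ->
  (wle a u \/ wle b u) -> (wle a v \/ wle b v) -> rel DC u v -> False.
Proof.
move=> Hab [Hu|Hu] [Hv|Hv] H.
- exact: HDC Hu Hv H.
- by apply: Hab; apply: HDCx Hu Hv H.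
- by apply: Hab; apply: HDCx Hv Hu (w_DCs HW H).
- exact: HDC Hu Hv H.
Qed.

Lemma pairEC a b u v : ~ rel DC a b -> ~ rel EC a b ->
  (wle a u \/ wle b u) -> (wle a v \/ wle b v) -> rel EC u v -> False.
Proof.
move=> Hab Hab' [Hu|Hu] [Hv|Hv] H.
- exact: HEC Hu Hv H.
- by case: (HECx Hu Hv H).
- by case: (HECx Hv Hu (w_ECs HW H)).
- exact: HEC Hu Hv H.
Qed.

Lemma helpDC a b (P : W -> Prop) :
  (forall u, P u -> wle a u \/ (~ rel DC a b /\ wle b u)) ->
  forall u v, rel DC u v -> P u -> P v -> False.
Proof.
move=> HP u v H /HP [Hu|[Hab Hu]] /HP [Hv|[Hab' Hv]].
- exact: HDC Hu Hv H.
- by apply: Hab'; apply: HDCx Hu Hv H.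
- by apply: Hab; apply: HDCx Hv Hu (w_DCs HW H).
- exact: HDC Hu Hv H.
Qed.

Lemma helpEC a b (P : W -> Prop) :
  (forall u, P u -> wle a u \/ (~ rel DC a b /\ ~ rel EC a b /\ wle b u)) ->
  forall u v, rel EC u v -> P u -> P v -> False.
Proof.
move=> HP u v H /HP [Hu|[Hab [Hab2 Hu]]] /HP [Hv|[Hab' [Hab2' Hv]]].
- exact: HEC Hu Hv H.
- by case: (HECx Hu Hv H).
- by case: (HECx Hv Hu (w_ECs HW H)).
- exact: HEC Hu Hv H.
Qed.

Lemma nd r a b : rel r a b -> r <> DC -> ~ rel DC a b.
Proof. move=> H Hr H'; apply: Hr; exact: (w_disj HW H H'). Qed.
Lemma ne r a b : rel r a b -> r <> EC -> ~ rel EC a b.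
Proof. move=> H Hr H'; apply: Hr; exact: (w_disj HW H H'). Qed.

Lemma good_bd a : good (wle a) (rel NTPP a).
Proof.
have pres : forall u, wle a u \/ rel NTPP a u -> wle a u \/ (~ rel DC a a /\ wle a u).
  by move=> u [H|H]; left => //; apply: NTPP_le.
have pres' : forall u, wle a u -> wle a u \/ (~ rel DC a a /\ ~ rel EC a a /\ wle a u).
  by move=> u H; left.
split.
- by move=> u v H Hu Hv; apply: (helpDC pres H Hu Hv).
- move=> u v H; split => Hu Hv.
  + exact: (helpEC pres' H Hu Hv).
  + exact: (helpEC pres' H (NTPP_le Hu) (NTPP_le Hv)).
- move=> u v H; split => Hu; [exact: (wle_trans HW Hu H) | exact: (nup_le HW Hu H)].
- move=> u v H Hu.
  have Ha : wle a u by case: Hu => // Hu; apply: NTPP_le.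
  have H' := wle_nup HW Ha H; split; [exact: NTPP_le H' | exact: H'].
Qed.

Lemma good_po a b : good (fun z => wle a z \/ (rel PO a b /\ wle b z))
                         (fun z => wle a z \/ (rel PO a b /\ wle b z)).
Proof.
have pres : forall u, wle a u \/ (rel PO a b /\ wle b u) ->
    wle a u \/ (~ rel DC a b /\ ~ rel EC a b /\ wle b u).
  move=> u [H|[H1 H2]]; first by left.
  by right; split; [apply: (nd H1) | split; [apply: (ne H1) | exact: H2]].
have presD : forall u, wle a u \/ (rel PO a b /\ wle b u) ->
    wle a u \/ (~ rel DC a b /\ wle b u).
  by move=> u /pres [H|[H1 [H2 H3]]]; [left | right].
split.
- by move=> u v H Hu Hv; apply: (helpDC presD H); [case: Hu | case: Hv].
- by move=> u v H; split => Hu Hv; exact: (helpEC pres H Hu Hv).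
- move=> u v H; have K : wle a u \/ rel PO a b /\ wle b u -> wle a v \/ rel PO a b /\ wle b v.
    move=> [Hu|[E Hu]]; [left; exact: (wle_trans HW Hu H) | right; split; [exact: E | exact: (wle_trans HW Hu H)]].
  by split.
- move=> u v H Hu.
  have K : wle a v \/ rel PO a b /\ wle b v.
    case: Hu => -[Hu|[E Hu]].
    + by left; apply: NTPP_le (wle_nup HW Hu H).
    + by right; split; [exact: E | apply: NTPP_le (wle_nup HW Hu H)].
    + by left; apply: NTPP_le (wle_nup HW Hu H).
    + by right; split; [exact: E | apply: NTPP_le (wle_nup HW Hu H)].
  by split.
Qed.

Lemma good_gad t a b : good (gL t a b) (gR t a b).
Proof.
case: t => [|[|[|t]]]; rewrite /gL /gR /=.
3: {
  (* type 2: EC gadget *)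
  have pres2 : forall u, (wle a u \/ rel EC a b /\ rel NTPP b u) \/
      ((~ rel EC a b /\ wle a u) \/ rel EC a b /\ (wle b u \/ rel NTPP a u)) ->
      wle a u \/ (rel EC a b /\ wle b u).
    move=> u [[H|[H1 H2]]|[[H1 H2]|[H1 [H2|H2]]]].
    - by left.
    - by right; split => //; apply: NTPP_le.
    - by left.
    - by right.
    - by left; apply: NTPP_le.
  have pres : forall u, (wle a u \/ rel EC a b /\ rel NTPP b u) \/
      ((~ rel EC a b /\ wle a u) \/ rel EC a b /\ (wle b u \/ rel NTPP a u)) ->
      wle a u \/ (~ rel DC a b /\ wle b u).
    move=> u /pres2 [H|[H1 H2]]; first by left.
    by right; split => //; apply: (nd H1).
  split.
  + by move=> u v H Hu Hv; apply: (helpDC pres H Hu Hv).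
  + move=> u v H; split.
    * move=> [Hu|[E Hu]] [Hv|[E' Hv]].
      -- exact: HEC Hu Hv H.
      -- exact: ECnup E' Hu Hv H.
      -- exact: ECnup E Hv Hu (w_ECs HW H).
      -- exact: HEC (NTPP_le Hu) (NTPP_le Hv) H.
    * move=> [[nE Hu]|[E Hu]] [[nE' Hv]|[E' Hv]]; try by [].
      -- exact: HEC Hu Hv H.
      -- have E2 := w_ECs HW E.
         case: Hu => Hu; case: Hv => Hv.
         ++ exact: HEC Hu Hv H.
         ++ exact: ECnup E2 Hu Hv H.
         ++ exact: ECnup E2 Hv Hu (w_ECs HW H).
         ++ exact: HEC (NTPP_le Hu) (NTPP_le Hv) H.
  + move=> u v H; split.
    * move=> [Hu|[E Hu]].
      -- left; exact: (wle_trans HW Hu H).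
      -- right; split; [exact: E | exact: (nup_le HW Hu H)].
    * move=> [[nE Hu]|[E [Hu|Hu]]].
      -- left; split; [exact: nE | exact: (wle_trans HW Hu H)].
      -- right; split; [exact: E | left; exact: (wle_trans HW Hu H)].
      -- right; split; [exact: E | right; exact: (nup_le HW Hu H)].
  + move=> u v H Hu; case: (pres2 u Hu) => [Ha|[E Hb]].
    * have H' := wle_nup HW Ha H; split; first by left; apply: NTPP_le.
      case: (pselect (rel EC a b)) => E; first by right; split => //; right.
      by left; split => //; apply: NTPP_le.
    * have H' := wle_nup HW Hb H; split; first by right.
      by right; split => //; left; apply: NTPP_le. }
- exact: good_bd.
- exact: good_po.
- exact: good_bd.
Qed.

End Gadgets.


Local Open Scope ring_scope.

Notation RR := Rdefinitions.R.

Lemma sum_ge_term (F : nat -> RR) (N k : nat) : (forall i, 0 <= F i) -> (k < N)%N ->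
  F k <= \sum_(0 <= i < N) F i.
Proof.
move=> F0; elim: N => [//|N IH] Hk.
rewrite big_nat_recr //=.
have S0 : 0 <= \sum_(0 <= i < N) F i by apply: sumr_ge0.
case: (ltngtP k N) => H.
- have := IH H; have := F0 N; lra.
- by move: Hk; rewrite ltnS leqNgt H.
- by subst k; lra.
Qed.

Lemma geo_sum (N : nat) : \sum_(0 <= k < N) ((2 : RR) ^+ k.+1)^-1 = 1 - (2 ^+ N)^-1.
Proof.
elim: N => [|N IH]; first by rewrite big_nil expr0 invr1 subrr.
rewrite big_nat_recr //= IH exprS.
have h : (2 : RR) ^+ N != 0 by rewrite expf_neq0.
by field.
Qed.

Section Heights.
Variables (W : Type) (rel : rcc8 -> W -> W -> Prop).
Hypothesis HW : region_structure rel.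
Variable e : nat -> W.

Definition wt (z : W) (k : nat) : RR :=
  if `[< rel NTPP (e k) z >] then ((2 : RR) ^+ k.+1)^-1 else 0.
Definition psum (z : W) (N : nat) : RR := \sum_(0 <= k < N) wt z k.
Definition hgt (z : W) : RR := sup (range (psum z)).

Lemma wt_ge0 z k : 0 <= wt z k.
Proof. by rewrite /wt; case: asboolP => _ //; rewrite invr_ge0 exprn_ge0. Qed.

Lemma wt_le z k : wt z k <= ((2 : RR) ^+ k.+1)^-1.
Proof. by rewrite /wt; case: asboolP => _ //; rewrite invr_ge0 exprn_ge0. Qed.

Lemma psum_ge0 z N : 0 <= psum z N.
Proof. by apply: sumr_ge0 => i _; apply: wt_ge0. Qed.

Lemma psum_le1 z N : psum z N <= 1.
Proof.
apply: (le_trans (y := \sum_(0 <= k < N) ((2 : RR) ^+ k.+1)^-1)).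
  by apply: ler_sum => i _; apply: wt_le.
rewrite geo_sum; have : 0 <= ((2 : RR) ^+ N)^-1 by rewrite invr_ge0 exprn_ge0.
lra.
Qed.

Lemma psum_ub z : has_ubound (range (psum z)).
Proof. by exists 1 => x [N _ <-]; apply: psum_le1. Qed.

Lemma psum_ne z : range (psum z) !=set0.
Proof. by exists (psum z 0); exists 0. Qed.

Lemma psum_le_hgt z N : psum z N <= hgt z.
Proof. by apply: (ub_le_sup (psum_ub z)); exists N. Qed.

Lemma hgt_ge0 z : 0 <= hgt z.
Proof. exact: (le_trans (psum_ge0 z 0) (psum_le_hgt z 0)). Qed.

Lemma hgt_le1 z : hgt z <= 1.
Proof. by apply: ge_sup; [apply: psum_ne | move=> x [N _ <-]; apply: psum_le1]. Qed.

Lemma psum_mono z N M : (N <= M)%N -> psum z N <= psum z M.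
Proof.
move=> NM; rewrite /psum [X in _ <= X](big_cat_nat _ (n := N)) //=.
have : 0 <= \sum_(N <= i < M) wt z i by apply: sumr_ge0 => i _; apply: wt_ge0.
lra.
Qed.

Lemma wt_mono x y k : wle rel x y -> wt x k <= wt y k.
Proof.
move=> H; rewrite /wt; case: asboolP => Hx; case: asboolP => Hy //.
by exfalso; apply: Hy; exact: (nup_le HW Hx H).
Qed.

Lemma hgt_mono x y : wle rel x y -> hgt x <= hgt y.
Proof.
move=> H; apply: ge_sup; first exact: psum_ne.
move=> r [N _ <-]; apply: (le_trans _ (psum_le_hgt y N)).
by apply: ler_sum => i _; apply: wt_mono.
Qed.

Lemma hgt_strict k y : rel NTPP (e k) y -> hgt (e k) < hgt y.
Proof.
move=> H.
have Hd : 0 < ((2 : RR) ^+ k.+1)^-1 by rewrite invr_gt0 exprn_gt0.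
have Hwy : wt y k = ((2 : RR) ^+ k.+1)^-1 by rewrite /wt; case: asboolP.
have Hwx : wt (e k) k = 0.
  by rewrite /wt; case: asboolP => // Hn; exfalso; apply: (NTPP_irr HW Hn).
have Hle : wle rel (e k) y by exact: (NTPP_le H).
have key : forall N, psum (e k) N <= hgt y - ((2 : RR) ^+ k.+1)^-1.
  move=> N; pose M := maxn N k.+1.
  apply: (le_trans (psum_mono (e k) (leq_maxl N k.+1))).
  have D : psum y M - psum (e k) M = \sum_(0 <= i < M) (wt y i - wt (e k) i).
    by rewrite /psum sumrB.
  have : wt y k - wt (e k) k <= \sum_(0 <= i < M) (wt y i - wt (e k) i).
    apply: sum_ge_term; last by rewrite leq_max ltnSn orbT.
    by move=> i; have := wt_mono i Hle; lra.
  have := psum_le_hgt y M; lra.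
have : hgt (e k) <= hgt y - ((2 : RR) ^+ k.+1)^-1.
  by apply: ge_sup; [apply: psum_ne | move=> r [N _ <-]; apply: key].
lra.
Qed.
End Heights.


Lemma intR (A : set RR) t :
  interior A t <-> exists2 e : RR, 0 < e & forall s, `|t - s| < e -> A s.
Proof. rewrite /interior nbhs_ballP /nbhs_ball /nbhs_ball_ /filter_from /=. by []. Qed.

Lemma abs_lt (a b e : RR) : `|a - b| < e -> a - e < b /\ b < a + e.
Proof. by rewrite ltr_norml => /andP [h1 h2]; split; lra. Qed.

Lemma abs_lt' (a b e : RR) : a - e < b -> b < a + e -> `|a - b| < e.
Proof. by move=> h1 h2; rewrite ltr_norml; apply/andP; split; lra. Qed.

Lemma oint (a b t : RR) : a < t -> t < b ->
  exists2 e : RR, 0 < e & forall s, `|t - s| < e -> a < s /\ s < b.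
Proof.
move=> h1 h2; case: (lerP (t - a) (b - t)) => h.
- exists (t - a); first lra.
  by move=> s /abs_lt [h3 h4]; split; lra.
- exists (b - t); first lra.
  by move=> s /abs_lt [h3 h4]; split; lra.
Qed.

Lemma small (e : RR) : 0 < e -> exists d : RR, [/\ 0 < d, d <= 1 & d < e].
Proof.
move=> h; case: (ltrP (e / 2) 1) => h'.
- by exists (e / 2); split; lra.
- by exists 1; split; lra.
Qed.

Lemma minpos (e1 e2 : RR) : 0 < e1 -> 0 < e2 -> exists2 e : RR, 0 < e & e <= e1 /\ e <= e2.
Proof.
move=> h1 h2; case: (lerP e1 e2) => h.
- by exists e1 => //; split; lra.
- by exists e2 => //; split; lra.
Qed.

Lemma cint (P : Prop) (a b t : RR) : ~ (P /\ a <= t /\ t <= b) ->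
  exists2 e : RR, 0 < e & forall s, `|t - s| < e -> ~ (P /\ a <= s /\ s <= b).
Proof.
move=> H; case: (pselect P) => HP; last by exists 1 => // s _ [].
case: (ltrP t a) => h1.
  by exists (a - t); [lra | move=> s /abs_lt [h3 h4] [_ [h5 h6]]; lra].
case: (ltrP b t) => h2.
  by exists (t - b); [lra | move=> s /abs_lt [h3 h4] [_ [h5 h6]]; lra].
by exfalso; apply: H.
Qed.

Section Line.
Variables (W : Type) (rel : rcc8 -> W -> W -> Prop).
Hypothesis HW : region_structure rel.
Variable e : nat -> W.

Definition GL (k : nat) (z : W) : Prop :=
  match (@unpickle (nat * nat * nat)%type k) with
  | Some (t, i, j) => gL rel t (e i) (e j) z
  | None => False
  end.
Definition GR (k : nat) (z : W) : Prop :=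
  match (@unpickle (nat * nat * nat)%type k) with
  | Some (t, i, j) => gR rel t (e i) (e j) z
  | None => False
  end.

Lemma good_G k : good rel (GL k) (GR k).
Proof.
rewrite /GL /GR; case: unpickle => [[[t i] j]|]; first exact: good_gad.
by split => //= u v _ [].
Qed.

Lemma GL_at t i j z : GL (pickle (t, i, j)) z = gL rel t (e i) (e j) z.
Proof. by rewrite /GL pickleK. Qed.
Lemma GR_at t i j z : GR (pickle (t, i, j)) z = gR rel t (e i) (e j) z.
Proof. by rewrite /GR pickleK. Qed.

Definition cen (k : nat) : RR := k%:R * 20.
Local Notation h := (hgt rel e).

Definition piece k z (t : RR) : Prop :=
  (GL k z /\ cen k - 4 - h z <= t /\ t <= cen k) \/
  (GR k z /\ cen k <= t /\ t <= cen k + 4 + h z).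
Definition AA z : set RR := fun t => exists k, piece k z t.

Lemma hb z : 0 <= h z /\ h z <= 1.
Proof. by split; [apply: hgt_ge0 | apply: hgt_le1]. Qed.

Lemma loc k z t : piece k z t -> cen k - 5 <= t /\ t <= cen k + 5.
Proof. by have [h0 h1] := hb z; case=> [[_ [h2 h3]]|[_ [h2 h3]]]; split; lra. Qed.

Lemma sep k k' (t : RR) : cen k - 8 < t -> t < cen k + 8 -> cen k' - 8 < t -> t < cen k' + 8 -> k = k'.
Proof.
rewrite /cen => h1 h2 h3 h4; case: (ltngtP k k') => H //.
- have : (k.+1)%:R <= k'%:R :> RR by rewrite ler_nat.
  rewrite -natr1 => h5; exfalso; clear H; lra.
- have : (k'.+1)%:R <= k%:R :> RR by rewrite ler_nat.
  rewrite -natr1 => h5; exfalso; clear H; lra.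
Qed.

Lemma A_local z k t : cen k - 8 < t -> t < cen k + 8 -> AA z t -> piece k z t.
Proof.
move=> h1 h2 [k' P]; have [h3 h4] := loc P.
have E : k' = k by apply: (sep (t := t)); lra.
by rewrite -E.
Qed.

Lemma intL k z t : GL k z -> cen k - 4 - h z < t -> t < cen k -> interior (AA z) t.
Proof.
move=> HL h1 h2; apply/intR; have [d d0 Hd] := oint h1 h2.
exists d => // s /Hd [h3 h4]; exists k; left; split => //; split; lra.
Qed.

Lemma intRt k z t : GR k z -> cen k < t -> t < cen k + 4 + h z -> interior (AA z) t.
Proof.
move=> HR h1 h2; apply/intR; have [d d0 Hd] := oint h1 h2.
exists d => // s /Hd [h3 h4]; exists k; right; split => //; split; lra.
Qed.

Lemma intLR k z t : GL k z -> GR k z -> cen k - 4 - h z < t -> t < cen k + 4 + h z ->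
  interior (AA z) t.
Proof.
move=> HL HR h1 h2; apply/intR; have [d d0 Hd] := oint h1 h2.
exists d => // s /Hd [h3 h4]; exists k.
case: (lerP s (cen k)) => h5; [left | right]; split => //; split; lra.
Qed.

Lemma dense z t : AA z t -> forall eps : RR, 0 < eps ->
  exists s, `|t - s| < eps /\ interior (AA z) s.
Proof.
move=> [k P] eps he; have [d [d0 d1 d2]] := small he.
have [h0 h1] := hb z.
case: P => [[HL [h2 h3]]|[HR [h2 h3]]].
- case: (lerP t (cen k - 2 - h z)) => h4.
  + exists (t + d); split; first by apply: abs_lt'; lra.
    by apply: (intL HL); lra.
  + exists (t - d); split; first by apply: abs_lt'; lra.
    by apply: (intL HL); lra.
- case: (lerP t (cen k + 2)) => h4.
  + exists (t + d); split; first by apply: abs_lt'; lra.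
    by apply: (intRt HR); lra.
  + exists (t - d); split; first by apply: abs_lt'; lra.
    by apply: (intRt HR); lra.
Qed.

Lemma closedA z t : ~ AA z t ->
  exists2 eps : RR, 0 < eps & forall s, `|t - s| < eps -> ~ AA z s.
Proof.
move=> H.
case: (pselect (exists k, cen k - 8 < t /\ t < cen k + 8)) => [[k [h1 h2]]|Hn].
- have nP : ~ piece k z t by move=> P; apply: H; exists k.
  have nL : ~ (GL k z /\ cen k - 4 - h z <= t /\ t <= cen k) by move=> P; apply: nP; left.
  have nR : ~ (GR k z /\ cen k <= t /\ t <= cen k + 4 + h z) by move=> P; apply: nP; right.
  have [e1 e10 H1] := cint nL; have [e2 e20 H2] := cint nR.
  have [e3 e30 [h3 h4]] := minpos e10 e20.
  have [e4 e40 [h5 h6]] := minpos e30 (@ltr01 RR).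
  exists e4 => // s hs [k' P].
  have [h7 h8] := abs_lt hs; have [h9 h10] := loc P.
  have E : k' = k by apply: (sep (t := t)); lra.
  subst k'; case: P => P.
  + by apply: (H1 s) => //; apply: abs_lt'; lra.
  + by apply: (H2 s) => //; apply: abs_lt'; lra.
- exists 1 => // s hs [k' P].
  have [h7 h8] := abs_lt hs; have [h9 h10] := loc P.
  by apply: Hn; exists k'; split; lra.
Qed.

Lemma notint k z : GL k z -> ~ GR k z -> ~ interior (AA z) (cen k).
Proof.
move=> HL HR /intR [eps he H].
have [d [d0 d1 d2]] := small he.
have [h0 h1] := hb z.
have : AA z (cen k + d) by apply: H; apply: abs_lt'; lra.
move/(A_local (k := k)) => P.
have : piece k z (cen k + d) by apply: P; lra.
by case=> [[_ [_ h3]]|[h3 _]]; [lra | apply: HR].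
Qed.

Lemma absent k z : ~ GL k z -> ~ GR k z -> ~ AA z (cen k).
Proof.
move=> HL HR P; have : piece k z (cen k) by apply: (A_local _ _ P); lra.
by case=> [[? _]|[? _]].
Qed.

Lemma present k z : GL k z \/ GR k z -> AA z (cen k).
Proof.
have [h0 h1] := hb z.
by case=> H; exists k; [left | right]; split => //; split; lra.
Qed.

Lemma subA x y : (forall k, (GL k x -> GL k y) /\ (GR k x -> GR k y)) -> h x <= h y ->
  AA x `<=` AA y.
Proof.
move=> H hxy t [k P]; exists k.
have [h0 h1] := hb x; have [H1 H2] := H k.
by case: P => [[HL [h2 h3]]|[HR [h2 h3]]]; [left|right]; split; auto; split; lra.
Qed.

Lemma subint x y : (forall k, GL k x \/ GR k x -> GL k y /\ GR k y) -> h x < h y ->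
  AA x `<=` interior (AA y).
Proof.
move=> H hxy t [k P]; have [h0 h1] := hb x.
have [HL HR] : GL k y /\ GR k y by apply: H; case: P => -[? _]; [left|right].
by apply: (intLR HL HR); case: P => [[_ [h2 h3]]|[_ [h2 h3]]]; lra.
Qed.

Lemma dcA x y : (forall k, (GL k x \/ GR k x) -> (GL k y \/ GR k y) -> False) ->
  AA x `&` AA y = set0.
Proof.
move=> H; apply/set0_iff => -[t [[k P] Q]].
have [h1 h2] := loc P.
have Q' : piece k y t by apply: (A_local _ _ Q); lra.
apply: (H k).
- by case: P => -[? _]; [left|right].
- by case: Q' => -[? _]; [left|right].
Qed.

Lemma ecA x y : (forall k, (GL k x -> GL k y -> False) /\ (GR k x -> GR k y -> False)) ->
  interior (AA x) `&` interior (AA y) = set0.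
Proof.
move=> H; apply/set0_iff => -[t [Ix Iy]].
have [k P] := interior_subset Ix.
have Q := interior_subset Iy.
have [h1 h2] := loc P.
have Q' : piece k y t by apply: (A_local _ _ Q); lra.
have [H1 H2] := H k.
case: P => [[Lx [h3 h4]]|[Rx [h3 h4]]]; case: Q' => [[Ly [h5 h6]]|[Ry [h5 h6]]].
- exact: H1 Lx Ly.
- have E : t = cen k by apply/eqP; rewrite eq_le; apply/andP; split.
  subst t; apply: (notint Lx _ Ix) => Rx; exact: H2 Rx Ry.
- have E : t = cen k by apply/eqP; rewrite eq_le; apply/andP; split.
  subst t; apply: (notint Ly _ Iy) => Ry; exact: H2 Rx Ry.
- exact: H2 Rx Ry.
Qed.

Lemma regA z : regular_closed (AA z).
Proof.
rewrite /regular_closed /Cl; apply: funext => t; apply: propext; split.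
- move=> H; apply: contrapT => nA; apply: H.
  have [eps he Heps] := closedA nA.
  by apply/intR; exists eps => // s /Heps nAs /interior_subset.
- move=> At /intR [eps he Heps].
  have [s [hs Is]] := dense At he.
  exact: Heps s hs Is.
Qed.

End Line.


Section Rel.
Variables (W : Type) (rel : rcc8 -> W -> W -> Prop).
Hypothesis HW : region_structure rel.
Variable e : nat -> W.
Local Notation A := (AA rel e).
Local Notation h := (hgt rel e).
Local Notation GL := (GL rel e).
Local Notation GR := (GR rel e).

Lemma G1 k u v : rel DC u v -> GL k u \/ GR k u -> GL k v \/ GR k v -> False.
Proof. by case: (good_G HW e k) => H _ _ _; apply: H. Qed.
Lemma G2 k u v : rel EC u v -> (GL k u -> GL k v -> False) /\ (GR k u -> GR k v -> False).
Proof. by case: (good_G HW e k) => _ H _ _; apply: H. Qed.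
Lemma G3 k u v : wle rel u v -> (GL k u -> GL k v) /\ (GR k u -> GR k v).
Proof. by case: (good_G HW e k) => _ _ H _; apply: H. Qed.
Lemma G4 k u v : rel NTPP u v -> GL k u \/ GR k u -> GL k v /\ GR k v.
Proof. by case: (good_G HW e k) => _ _ _ H; apply: H. Qed.

Lemma hb' z : 0 <= h z /\ h z <= 1.
Proof. by split; [apply: hgt_ge0 | apply: hgt_le1]. Qed.

Lemma ne_i i : A (e i) (cen (pickle (1%N, i, i))).
Proof. by apply: present; left; rewrite GL_at /=; left; apply: wle_refl. Qed.

Lemma abs_i i y : ~ wle rel (e i) y -> ~ A y (cen (pickle (1%N, i, i))).
Proof.
move=> H; apply: absent; rewrite ?GL_at ?GR_at /=; by case=> [//|[_ //]].
Qed.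

Lemma r_DC i j : rel DC (e i) (e j) -> top_rel DC (A (e i)) (A (e j)).
Proof. by move=> H; apply: dcA => k; apply: G1 H. Qed.

Lemma r_EC i j : rel EC (e i) (e j) -> top_rel EC (A (e i)) (A (e j)).
Proof.
move=> H; split; first by apply: ecA => k; apply: G2 H.
exists (cen (pickle (2%N, i, j))); split; apply: present.
- by left; rewrite GL_at /=; left; apply: wle_refl.
- by right; rewrite GR_at /=; right; split => //; left; apply: wle_refl.
Qed.

Lemma r_PO i j : rel PO (e i) (e j) -> top_rel PO (A (e i)) (A (e j)).
Proof.
move=> H; split; [|split].
- pose k := pickle (1%N, i, j).
  have [h0 _] := hb' (e i); have [h1 _] := hb' (e j).
  exists (cen k - 1); split.
  + apply: (intL (k := k)); [by rewrite GL_at /=; left; apply: wle_refl | lra | lra].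
  + apply: (intL (k := k)); [ | lra | lra].
    by rewrite GL_at /=; right; split => //; apply: wle_refl.
- move=> Hs; apply: (abs_i (y := e j) _ (Hs _ (ne_i i))).
  by move=> Hl; apply: (wle_notPO HW Hl H).
- move=> Hs; apply: (abs_i (y := e i) _ (Hs _ (ne_i j))).
  by move=> Hl; apply: (wle_notPO HW Hl (w_POs HW H)).
Qed.

Lemma r_TPP i j : rel TPP (e i) (e j) -> top_rel TPP (A (e i)) (A (e j)).
Proof.
move=> H; have Hl := TPP_le H; split; [|split].
- apply: subA; first by move=> k; apply: G3.
  exact: (hgt_mono HW e Hl).
- move=> Hs; pose k := pickle (3%N, i, i).
  have Ax : A (e i) (cen k) by apply: present; left; rewrite GL_at /=; apply: wle_refl.
  apply: (notint (k := k) (z := e j) _ _ (Hs _ Ax)).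
    by rewrite GL_at.
  by rewrite GR_at /= => Hn; apply: (TPP_notNTPP HW H Hn).
- move=> E; have Hy := ne_i j; rewrite -E in Hy.
  by apply: (abs_i _ Hy) => Hl'; apply: (TPP_notge HW H Hl').
Qed.

Lemma r_NTPP i j : rel NTPP (e i) (e j) -> top_rel NTPP (A (e i)) (A (e j)).
Proof.
move=> H; split.
- apply: subint; first by move=> k; apply: G4.
  exact: (hgt_strict HW H).
- move=> E; have Hy := ne_i j; rewrite -E in Hy.
  by apply: (abs_i _ Hy) => Hl'; apply: (NTPP_notge HW H Hl').
Qed.

Lemma r_all r i j : rel r (e i) (e j) -> top_rel r (A (e i)) (A (e j)).
Proof.
case: r => H.
- exact: r_DC.
- exact: r_EC.
- exact: r_PO.
- by rewrite (w_eq HW H).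
- exact: r_TPP.
- exact: r_NTPP.
- exact: (r_TPP (w_iTPP HW H)).
- exact: (r_NTPP (w_iNTPP HW H)).
Qed.

Lemma nrc_i i : nonempty_regular_closed (A (e i)).
Proof. by split; [apply: regA | exists (cen (pickle (1%N, i, i))); apply: ne_i]. Qed.
End Rel.


Local Close Scope ring_scope.

Section Transfer.
Variables (W1 W2 : Type) (rel1 : rcc8 -> W1 -> W1 -> Prop)
  (rel2 : rcc8 -> W2 -> W2 -> Prop) (F : W1 -> W2).
Hypothesis Fsurj : forall b, exists a, F a = b.
Hypothesis Finj : forall a a', F a = F a' -> a = a'.
Hypothesis Frel : forall r a a', rel2 r (F a) (F a') <-> rel1 r a a'.

Lemma transfer_holds V phi : forall a,
  holds rel2 (fun i b => exists a, F a = b /\ V i a) (F a) phi <-> holds rel1 V a phi.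
Proof.
elim: phi => [i|p IH|p IHp q IHq|r p IH] a /=.
- split.
    by move=> [a' [E H]]; rewrite -(Finj E).
  by move=> H; exists a.
- by split => H1 H2; apply: H1; apply/IH.
- by split => -[H1 H2]; split; first [apply/IHp; done | apply/IHq; done].
- split => H u.
  + move=> Hu; apply/IH; apply: H; exact/Frel.
  + have [u' <-] := Fsurj u; move=> /Frel Hu; apply/IH; exact: H.
Qed.

Lemma transfer_valid phi : valid_in rel2 phi -> valid_in rel1 phi.
Proof. by move=> H V a; apply/transfer_holds; apply: H. Qed.
End Transfer.

Fixpoint subs (p : form) : list form :=
  p :: match p with
       | Var _ => nil
       | Neg q => subs q
       | And q1 q2 => List.app (subs q1) (subs q2)
       | Box _ q => subs q
       end.

Lemma subs_self p : List.In p (subs p).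
Proof. by case: p => *; left. Qed.

Lemma subs_trans p q r : List.In q (subs p) -> List.In r (subs q) -> List.In r (subs p).
Proof.
elim: p => [i|p IH|p1 IH1 p2 IH2|s p IH] /=.
- by case=> [<- //|[]].
- by case=> [<- //|H1 H2]; right; apply: IH H1 H2.
- case=> [<- //|H1 H2]; right; apply/List.in_or_app.
  case: (List.in_app_or _ _ _ H1) => H3; [left; exact: IH1 H3 H2 | right; exact: IH2 H3 H2].
- by case=> [<- //|H1 H2]; right; apply: IH H1 H2.
Qed.

Section Closure.
Variables (W : Type) (rel : rcc8 -> W -> W -> Prop) (V : nat -> W -> Prop)
  (phi : form) (w0 : W).

Definition wspec (p : W * nat) (u : W) : Prop :=
  match List.nth p.2 (subs phi) (Var 0) with
  | Box r chi => (exists u', rel r p.1 u' /\ ~ holds rel V u' chi) ->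
                 rel r p.1 u /\ ~ holds rel V u chi
  | _ => True
  end.

Lemma wspec_ex p : exists u, wspec p u.
Proof.
rewrite /wspec; case: (List.nth _ _ _) => [i|q|q1 q2|r chi]; try by exists w0.
case: (pselect (exists u', rel r p.1 u' /\ ~ holds rel V u' chi)) => [[u' H]|H].
  by exists u'.
by exists w0.
Qed.

Definition wit : W * nat -> W := projT1 (choice wspec_ex).
Lemma witP p : wspec p (wit p).
Proof. exact: (projT2 (choice wspec_ex) p). Qed.

Fixpoint walk (x : W) (l : list nat) : W :=
  match l with nil => x | k :: l' => walk (wit (x, k)) l' end.

Lemma walk_rcons x l k : walk x (List.app l (k :: nil)) = wit (walk x l, k).
Proof. by elim: l x => [|a l IH] x //=. Qed.

Definition CC : set W := fun x => exists l, walk w0 l = x.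

Lemma CC_wit x k : CC x -> CC (wit (x, k)).
Proof. by case=> l <-; exists (List.app l (k :: nil)); rewrite walk_rcons. Qed.

Lemma CC_w0 : CC w0.
Proof. by exists nil. Qed.

Lemma closure_holds psi : List.In psi (subs phi) -> forall x : {x | CC x},
  holds (@restrict _ rel CC) (fun i y => V i (proj1_sig y)) x psi <->
  holds rel V (proj1_sig x) psi.
Proof.
elim: psi => [i|p IH|p IHp q IHq|r p IH] Hin x /=.
- done.
- have Hp : List.In p (subs phi) by apply: subs_trans Hin _; right; apply: subs_self.
  by split => H1 H2; apply: H1; apply/(IH Hp).
- have Hp : List.In p (subs phi).
    by apply: subs_trans Hin _; right; apply/List.in_or_app; left; apply: subs_self.
  have Hq : List.In q (subs phi).
    by apply: subs_trans Hin _; right; apply/List.in_or_app; right; apply: subs_self.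
  by split => -[H1 H2]; split; first [apply/(IHp Hp); done | apply/(IHq Hq); done].
- have Hp : List.In p (subs phi) by apply: subs_trans Hin _; right; apply: subs_self.
  split => H.
  + move=> u Hu; apply: contrapT => Hn.
    have [k [_ Hk]] := List.In_nth _ _ (Var 0) Hin.
    have := witP (proj1_sig x, k); rewrite /wspec /= Hk => Hw.
    have [Hr Hnh] := Hw (ex_intro _ u (conj Hu Hn)).
    apply: Hnh.
    have Cw : CC (wit (proj1_sig x, k)) := CC_wit k (proj2_sig x).
    have := H (exist _ _ Cw) Hr.
    by move/(IH Hp).
  + by move=> u Hu; apply/(IH Hp); apply: H.
Qed.

Definition enumC (m : nat) : W := walk w0 (odflt nil (unpickle m)).

Lemma CC_enum x : CC x -> exists m, enumC m = x.
Proof. by case=> l <-; exists (pickle l); rewrite /enumC pickleK. Qed.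
End Closure.

Definition realizes n (W : Type) (rel : rcc8 -> W -> W -> Prop) (e : nat -> W)
  (f : W -> set (Rn n)) :=
  (forall m, nonempty_regular_closed (f (e m))) /\
  (forall r i j, rel r (e i) (e j) -> top_rel r (f (e i)) (f (e j))).

Section Embed.
Variables (n : nat) (W : Type) (rel : rcc8 -> W -> W -> Prop).
Hypothesis HW : region_structure rel.
Variables (e : nat -> W) (f : W -> set (Rn n)).
Hypothesis Hf : realizes rel e f.
Variable S : set W.
Hypothesis HS : forall x, S x -> exists m, e m = x.

Definition g0 : Treg (Rn n) := exist _ (f (e 0)) (Hf.1 0).

Definition gmap (x : W) : Treg (Rn n) :=
  match pselect (nonempty_regular_closed (f x)) with
  | left p => exist _ (f x) p
  | right _ => g0
  end.

Lemma gmap_val x : S x -> proj1_sig (gmap x) = f x.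
Proof.
move=> Sx; rewrite /gmap; case: pselect => [p|np] //=; exfalso; apply: np.
by have [m <-] := HS Sx; exact: Hf.1 m.
Qed.

Lemma f_rel r x y : S x -> S y -> (top_rel r (f x) (f y) <-> rel r x y).
Proof.
move=> Sx Sy; have [i Ei] := HS Sx; have [j Ej] := HS Sy; subst x y.
split; last exact: Hf.2.
move=> H; have [r' Hr'] := HW.2.2.1 (e i) (e j).
have H' := Hf.2 _ _ _ Hr'.
have RT := Treg_RS (inhabits g0).
have : Treg_rel r (gmap (e i)) (gmap (e j)) by rewrite /Treg_rel !gmap_val.
have : Treg_rel r' (gmap (e i)) (gmap (e j)) by rewrite /Treg_rel !gmap_val.
by move=> A B; have E := RT.2.1 _ _ _ _ A B; subst r'.
Qed.

Definition S' : set (Treg (Rn n)) := gmap @` S.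

Definition Fm (x : {x | S x}) : {t | S' t} :=
  exist _ (gmap (proj1_sig x)) (ex_intro2 _ _ (proj1_sig x) (proj2_sig x) erefl).

Lemma embed_valid phi : valid_in (@restrict _ (@Treg_rel (Rn n)) S') phi ->
  valid_in (@restrict _ rel S) phi.
Proof.
apply: (transfer_valid (F := Fm)).
- by move=> [t [x Sx E]]; exists (exist _ x Sx); apply: sig_eq.
- move=> [a Sa] [b Sb] /(f_equal (fun t => proj1_sig (proj1_sig t))) /=.
  rewrite !gmap_val // => E; apply: sig_eq => /=.
  by apply/(HW.2.2.2.1 a b); apply/(f_rel EQ Sa Sb).
- by move=> r [a Sa] [b Sb]; rewrite /restrict /Treg_rel /= !gmap_val //; exact: f_rel.
Qed.

Lemma S'_ne : S !=set0 -> S' !=set0.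
Proof. by case=> x Sx; exists (gmap x); exists x. Qed.

Lemma S'_fin : finite_set S -> finite_set S'.
Proof. exact: finite_image. Qed.
End Embed.

Lemma fin_enum (W : Type) (S : set W) (w : W) : finite_set S ->
  exists e : nat -> W, forall x, S x -> exists m, e m = x.
Proof.
case=> k /card_bijP [fb [g fK gK]].
exists (fun m => match pselect (`I_k m) with
                 | left p => proj1_sig (g (exist _ m (mem_set p)))
                 | right _ => w end).
move=> x Sx; pose a : set_type S := exist _ x (mem_set Sx).
exists (proj1_sig (fb a)).
case: pselect => [p|np]; last by exfalso; apply: np; exact: (set_mem (proj2_sig (fb a))).
have -> : exist _ (proj1_sig (fb a)) (mem_set p) = fb a by apply: sig_eq.
by rewrite fK.
Qed.



Local Open Scope ring_scope.

Section Lift.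
Variable n : nat.
Hypothesis hn : (0 < n)%N.
Definition i0 : 'I_n := Ordinal hn.
Definition piR (w : 'rV[RR]_n) : RR := w ord0 i0.
Definition lift (A : set RR) : set (Rn n) := fun w => A (piR w).

Lemma intRn (A : set (Rn n)) (w : 'rV[RR]_n) : interior A w <->
  exists2 e : RR, 0 < e & forall w' : 'rV[RR]_n, (forall i j, `|w i j - w' i j| < e) -> A w'.
Proof.
rewrite /interior nbhs_ballP /nbhs_ball /nbhs_ball_ /filter_from /=.
split => -[e e0 H]; exists e => //.
  by move=> w' Hw'; apply: H; split.
by move=> w' [_ Hw']; apply: H.
Qed.

Lemma int_lift A : interior (lift A) = lift (interior A).
Proof.
apply: funext => w; apply: propext; split.
- move/intRn => [eps he H]; apply/intR; exists eps => // s hs.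
  pose w' : 'rV[RR]_n := \row_j (if j == i0 then s else w ord0 j).
  have : lift A w'.
    apply: H => i j; rewrite mxE (ord1 i); case: eqP => [->|_].
      exact: hs.
    by rewrite subrr normr0.
  by rewrite /lift /piR mxE eqxx.
- move/intR => [eps he H]; apply/intRn; exists eps => // w' Hw'.
  exact: (H _ (Hw' ord0 i0)).
Qed.

Lemma Cl_lift A : Cl (lift A) = lift (Cl A).
Proof.
rewrite /Cl; have -> : ~` lift A = lift (~` A) by [].
by rewrite int_lift.
Qed.

Lemma lift_surj s : exists w : 'rV[RR]_n, piR w = s.
Proof. by exists (const_mx s); rewrite /piR mxE. Qed.

Lemma lift_subE A B : (lift A `<=` lift B) = (A `<=` B).
Proof.
apply: propext; split => H.
- move=> s As; have [w E] := lift_surj s.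
  have := H w; rewrite /lift E; exact.
- by move=> w; apply: H.
Qed.

Lemma lift_eqE A B : (lift A = lift B) = (A = B).
Proof.
apply: propext; split => [E|->] //.
apply: funext => s; have [w <-] := lift_surj s.
exact: (congr1 (fun X => X w) E).
Qed.

Lemma lift_I A B : lift A `&` lift B = lift (A `&` B).
Proof. by []. Qed.

Lemma lift0 : lift set0 = set0.
Proof. by []. Qed.

Lemma lift_neE A : (lift A !=set0) = (A !=set0).
Proof.
apply: propext; split => -[x Hx].
- by exists (piR x).
- by have [w E] := lift_surj x; exists w; rewrite /lift E.
Qed.

Lemma lift_neqE A B : (lift A <> lift B) = (A <> B).
Proof. by rewrite lift_eqE. Qed.

Lemma top_rel_lift r A B : top_rel r (lift A) (lift B) <-> top_rel r A B.
Proof.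
case: r => /=; rewrite ?int_lift ?lift_I -?lift0 ?lift_eqE ?lift_neE ?lift_subE //.
Qed.

Lemma nrc_lift A : nonempty_regular_closed (lift A) <-> nonempty_regular_closed A.
Proof.
by rewrite /nonempty_regular_closed /regular_closed int_lift Cl_lift lift_eqE lift_neE.
Qed.
End Lift.

Lemma realization n (hn : (0 < n)%N) (W : Type) (rel : rcc8 -> W -> W -> Prop) :
  region_structure rel -> forall e : nat -> W, exists f : W -> set (Rn n), realizes rel e f.
Proof.
move=> HW e; exists (fun z => lift hn (AA rel e z)); split.
- by move=> m; apply/nrc_lift; apply: nrc_i.
- by move=> r i j H; apply/top_rel_lift; exact: (r_all HW H).
Qed.


Local Close Scope ring_scope.

Lemma LS_Rn_RS n (hn : (0 < n)%N) phi : LS_Rn n phi -> L_RS phi.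
Proof.
move=> H W rel HW V w.
pose e := enumC rel V phi w.
have [f Hf] := realization hn HW e.
have HS : forall x, CC rel V phi w x -> exists m, e m = x by move=> x; exact: CC_enum.
have Hv := @embed_valid _ _ _ HW _ _ Hf _ HS phi
   (H _ (S'_ne Hf (ex_intro _ w (CC_w0 rel V phi w)))).
have := Hv (fun i y => V i (proj1_sig y)) (exist _ w (CC_w0 rel V phi w)).
by move/(closure_holds (subs_self phi)).
Qed.

Lemma Lfin_Rn_RS n (hn : (0 < n)%N) phi : Lfin_Rn n phi -> Lfin_RS phi.
Proof.
move=> H W rel HW S [w Sw] Sfin.
have [e HS] := fin_enum w Sfin.
have [f Hf] := realization hn HW e.
apply: (@embed_valid _ _ _ HW _ _ Hf _ HS phi).
apply: (H (S' Hf S)); [apply: S'_ne; by exists w | exact: S'_fin].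
Qed.

Theorem theorem4p1 (n : nat) (hn : (0 < n)%N) :
  (forall phi : form,
      (L_RS phi <-> LS_TOP phi) /\ (LS_TOP phi <-> LS_Rn n phi)) /\
  (forall phi : form,
      (Lfin_RS phi <-> Lfin_TOP phi) /\ (Lfin_TOP phi <-> Lfin_Rn n phi)).
Proof.
have A1 : forall phi, L_RS phi -> LS_TOP phi.
  move=> phi H T S [t St]; apply: H; apply: (restrict_RS (Treg_RS (inhabits t))).
  by exists t.
have A2 : forall phi, LS_TOP phi -> LS_Rn n phi by move=> phi H; exact: H.
have A3 := @LS_Rn_RS n hn.
have B1 : forall phi, Lfin_RS phi -> Lfin_TOP phi.
  move=> phi H T S [t St] Sfin; apply: (H _ _ (Treg_RS (inhabits t))) => //.
  by exists t.
have B2 : forall phi, Lfin_TOP phi -> Lfin_Rn n phi by move=> phi H; exact: H.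
have B3 := @Lfin_Rn_RS n hn.
split=> phi; split; split; auto.
Qed.
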